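(* Let $(G,d)$ be a $p$-uniformly convex space with $p\in(1,\infty)$ and constant $c>0$, let $D\subset G$ and $T:D\rightrightarrows G$, and let $\tau\in[0,1]$. For $x,y\in D$, $x_+\in T(x)$, $y_+\in T(y)$ put $x_\tau=(1-\tau)x\oplus\tau x_+$ and $y_\tau=(1-\tau)y\oplus\tau y_+$. Then $$d(x_\tau,y_\tau)^p\le(1-\tau)^2d(x,y)^p+\tau^2d(x_+,y_+)^p+2(1-\tau)\tau\,\Delta^{(p,c)}(x,y,x_+,y_+)+\tfrac{2-c}{2}(1-\tau)\tau\big(d(y,x_+)^p+d(x,y_+)^p\big).$$
   Context: $(G,d)$ is uniquely geodesic; $(1-\tau)x\oplus\tau y$ is the point on the geodesic from $x$ to $y$ at distance $\tau d(x,y)$ from $x$. $(G,d)$ is $p$-uniformly convex with constant $c$ if $d(z,(1-\tau)x\oplus\tau y)^p\le(1-\tau)d(z,x)^p+\tau d(z,y)^p-\frac c2\tau(1-\tau)d(x,y)^p$ for all $\tau\in[0,1]$ and $x,y,z\in G$. $\Delta^{(p,c)}(x,y,u,v)=\frac c4\big(d(x,v)^p+d(y,u)^p-d(x,u)^p-d(y,v)^p\big)$. *)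

(* Defs.v *)
From Stdlib Require Import Reals Lra.
Open Scope R_scope.

Definition pw (t p : R) : R := if Rle_dec t 0 then 0 else Rpower t p.

Definition is_metric {G : Type} (d : G -> G -> R) : Prop :=
  (forall x y, 0 <= d x y) /\
  (forall x y, d x y = 0 <-> x = y) /\
  (forall x y, d x y = d y x) /\
  (forall x y z, d x z <= d x y + d y z).

Definition is_geodesic {G : Type} (d : G -> G -> R) (x y : G) (g : R -> G) : Prop :=
  g 0 = x /\ g 1 = y /\
  (forall s t, 0 <= s <= 1 -> 0 <= t <= 1 -> d (g s) (g t) = Rabs (s - t) * d x y).

(* (G,d) is uniquely geodesic, and geo x y is the (unique) geodesic from x to y;
   (1-t)x ⊕ t y := geo x y t, the point of the geodesic at distance t d(x,y) from x. *)
Definition uniquely_geodesic {G : Type} (d : G -> G -> R) (geo : G -> G -> R -> G) : Prop :=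
  forall x y, is_geodesic d x y (geo x y) /\
    (forall g, is_geodesic d x y g -> forall t, 0 <= t <= 1 -> g t = geo x y t).

Definition p_uniformly_convex {G : Type} (d : G -> G -> R) (geo : G -> G -> R -> G)
  (p c : R) : Prop :=
  forall (tau : R) (x y z : G), 0 <= tau <= 1 ->
    pw (d z (geo x y tau)) p <=
      (1 - tau) * pw (d z x) p + tau * pw (d z y) p
      - c / 2 * tau * (1 - tau) * pw (d x y) p.

Definition DeltaPC {G : Type} (d : G -> G -> R) (p c : R) (x y u v : G) : R :=
  c / 4 * (pw (d x v) p + pw (d y u) p - pw (d x u) p - pw (d y v) p).

(* Main.v *)
Require Import Defs.
From Stdlib Require Import Reals Lra Psatz.
Open Scope R_scope.

Theorem mainTheorem4 (G : Type) (d : G -> G -> R) (geo : G -> G -> R -> G)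
  (p c : R)
  (Hmet : is_metric d) (Hgeo : uniquely_geodesic d geo)
  (Hp : 1 < p) (Hc : 0 < c) (Hpuc : p_uniformly_convex d geo p c)
  (D : G -> Prop) (T : G -> G -> Prop) (tau : R) (Htau : 0 <= tau <= 1)
  (x y xp yp : G) (Hx : D x) (Hy : D y) (Hxp : T x xp) (Hyp : T y yp) :
  let xt := geo x xp tau in
  let yt := geo y yp tau in
  pw (d xt yt) p <=
    (1 - tau) ^ 2 * pw (d x y) p + tau ^ 2 * pw (d xp yp) p
    + 2 * (1 - tau) * tau * DeltaPC d p c x y xp yp
    + (2 - c) / 2 * (1 - tau) * tau * (pw (d y xp) p + pw (d x yp) p).
Proof.
  intros xt yt.
  destruct Hmet as [_ [_ [Hsym _]]].
  pose proof (Hpuc tau y yp xt Htau) as H1.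
  pose proof (Hpuc tau x xp y Htau) as H2.
  pose proof (Hpuc tau x xp yp Htau) as H3.
  fold xt yt in H1, H2, H3.
  rewrite (Hsym xt y) in H1. rewrite (Hsym xt yp) in H1.
  rewrite (Hsym y x) in H2. rewrite (Hsym yp x), (Hsym yp xp) in H3.
  unfold DeltaPC.
  set (A := pw (d xt yt) p) in *.
  set (B := pw (d y xt) p) in *.
  set (C := pw (d yp xt) p) in *.
  set (E := pw (d y yp) p) in *.
  set (F := pw (d x y) p) in *.
  set (I := pw (d y xp) p) in *.
  set (J := pw (d x xp) p) in *.
  set (K := pw (d x yp) p) in *.
  set (L := pw (d xp yp) p) in *.
  assert (Ha : 0 <= 1 - tau) by lra.
  assert (H2' := Rmult_le_compat_l _ _ _ Ha H2).
  assert (H3' := Rmult_le_compat_l _ _ _ (proj1 Htau) H3).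
  nra.
Qed.
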